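(* Let $n\geq 3$, $d\geq 2$, $\ell\in\mathbb{R}_{>0}^n$, let $f_d:\mathbb{R}^d\to\mathbb{R}^{d+1}$ be a linear Euclidean isometry with induced map $F_d:V_d(\ell)\to V_{d+1}(\ell)$, and let $P\in V_d(\ell)$. Then the preimage under $F_d$ of the $SO(d+1)$-orbit of $F_d(P)$ is the $O(d)$-orbit of $P$: \[F_d^{-1}\big(SO(d+1)(F_d(P))\big)=O(d)(P).\]
   Context: $V_d(\ell)=\{(\mathbf{v}_1,\ldots,\mathbf{v}_{n-1})\in(\mathbb{R}^d)^{n-1} : \|\mathbf{v}_i-\mathbf{v}_{i-1}\|=l_i,\ i=1,\ldots,n\}$ with $\mathbf{v}_0=\mathbf{v}_n=\mathbf{0}$. A group $G$ of linear maps acts on polygons diagonally, $T(\mathbf{v}_1,\ldots,\mathbf{v}_{n-1})=(T(\mathbf{v}_1),\ldots,T(\mathbf{v}_{n-1}))$, and $G(P)=\{T(P):T\in G\}$ is the orbit. $F_d(\mathbf{v}_1,\ldots,\mathbf{v}_{n-1})=(f_d(\mathbf{v}_1),\ldots,f_d(\mathbf{v}_{n-1}))$. *)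

(* Defs.v *)
From mathcomp Require Import all_boot all_order all_algebra.
From mathcomp Require Import reals.
Set Implicit Arguments. Unset Strict Implicit. Unset Printing Implicit Defensive.
Import Order.TTheory GRing.Theory Num.Theory.
Local Open Scope ring_scope.

Section Defs.
Variable R : realType.

Definition enorm d (v : 'cV[R]_d) : R := Num.sqrt (\sum_(j < d) v j 0 ^+ 2).

(* A polygon (v_1, ..., v_{n-1}) in (R^d)^{n-1} *)
Definition polygon n d := 'I_n.-1 -> 'cV[R]_d.

(* vertex P i = v_i, with v_0 = v_n = 0 *)
Definition vertex n d (P : polygon n d) (i : nat) : 'cV[R]_d :=
  match insub i.-1 with
  | Some k => if i == 0%N then 0 else P k
  | None => 0
  end.

(* V_d(l): ||v_i - v_{i-1}|| = l_i for i = 1..n; l_i is stored as l (i-1) *)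
Definition polyspace n d (l : 'I_n -> R) : polygon n d -> Prop :=
  fun P => forall i : 'I_n, enorm (vertex P i.+1 - vertex P i) = l i.

Definition orthogonal_mx d (T : 'M[R]_d) : Prop := T *m T^T = 1%:M.
Definition special_orthogonal_mx d (T : 'M[R]_d) : Prop :=
  orthogonal_mx T /\ \det T = 1.

Definition act_poly n d e (T : 'M[R]_(e, d)) (P : polygon n d) : polygon n e :=
  fun k => T *m P k.

Definition poly_orbit n d (G : 'M[R]_d -> Prop) (P : polygon n d) : polygon n d -> Prop :=
  fun Q => exists2 T, G T & Q = act_poly T P.

Definition lin_isometry d e (f : 'M[R]_(e, d)) : Prop :=
  forall v : 'cV[R]_d, enorm (f *m v) = enorm v.

End Defs.

(* Main.v *)
Require Import Defs.
From mathcomp Require Import all_boot all_order all_algebra.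
From mathcomp Require Import reals.
From mathcomp Require Import ring lra.
Import Order.TTheory GRing.Theory Num.Theory.
Local Open Scope ring_scope.
Set Implicit Arguments. Unset Strict Implicit.

Section Helpers.
Variable R : realType.

Definition dot m (x y : 'cV[R]_m) : R := (x^T *m y) 0 0.

Lemma dotE m (x y : 'cV[R]_m) : x^T *m y = (dot x y)%:M.
Proof. exact: mx11_scalar. Qed.

Lemma dotC m (x y : 'cV[R]_m) : dot x y = dot y x.
Proof.
rewrite /dot !mxE; apply: eq_bigr => i _; rewrite !mxE mulrC //.
Qed.

Lemma sumsqE m (v : 'cV[R]_m) : \sum_(j < m) v j 0 ^+ 2 = dot v v.
Proof. rewrite /dot mxE; apply: eq_bigr => j _; rewrite !mxE expr2 //. Qed.

Lemma dot_ge0 m (v : 'cV[R]_m) : 0 <= dot v v.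
Proof. rewrite -sumsqE; apply: sumr_ge0 => j _; exact: sqr_ge0. Qed.

Lemma dot_eq0 m (v : 'cV[R]_m) : dot v v = 0 -> v = 0.
Proof.
rewrite -sumsqE => h; apply/matrixP => i j; rewrite ord1 mxE.
have := @psumr_eq0P _ _ _ (fun j => v j 0 ^+ 2) (fun j _ => sqr_ge0 (v j 0)) h i isT.
by move/eqP; rewrite sqrf_eq0 => /eqP.
Qed.

Lemma enormE m (v : 'cV[R]_m) : enorm v = Num.sqrt (dot v v).
Proof. by rewrite /enorm sumsqE. Qed.

Lemma enorm_isoE m k (v : 'cV[R]_m) (w : 'cV[R]_k) : enorm v = enorm w -> dot v v = dot w w.
Proof.
rewrite !enormE => /eqP; rewrite eqr_sqrt ?dot_ge0 //; exact/eqP.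
Qed.

Lemma enorm_isom e m (A : 'M[R]_(e, m)) (v : 'cV[R]_m) :
  A^T *m A = 1%:M -> enorm (A *m v) = enorm v.
Proof.
move=> hA; rewrite !enormE /dot trmx_mul -mulmxA (mulmxA A^T) hA mul1mx //.
Qed.

Lemma dotDr m (x y z : 'cV[R]_m) : dot x (y + z) = dot x y + dot x z.
Proof. by rewrite /dot mulmxDr mxE. Qed.
Lemma dotDl m (x y z : 'cV[R]_m) : dot (x + y) z = dot x z + dot y z.
Proof. by rewrite /dot linearD /= mulmxDl mxE. Qed.
Lemma dot_tr m k (A : 'M[R]_(m, k)) x y : dot y (A *m x) = dot (A^T *m y) x.
Proof. by rewrite /dot trmx_mul trmxK mulmxA. Qed.

Lemma iso_tr d e (f : 'M[R]_(e, d)) : lin_isometry f -> f^T *m f = 1%:M.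
Proof.
move=> hf.
set N := f^T *m f - 1%:M.
have hNs : N^T = N by rewrite /N linearB /= trmx_mul trmxK trmx1.
have hq v : dot v (N *m v) = 0.
  have := enorm_isoE (hf v).
  rewrite /dot /N mulmxBl mul1mx mulmxBr !mulmxA trmx_mul !mxE.
  idtac.
  move=> ->; rewrite subrr //.
have hb x y : dot x (N *m y) = 0.
  have := hq (x + y).
  rewrite mulmxDr !dotDl !dotDr !hq add0r addr0.
  rewrite [dot y _]dot_tr hNs [dot (N *m y) x]dotC => /eqP.
  by rewrite -mulr2n mulrn_eq0 /= => /eqP.
have hN (y : 'cV_d) : N *m y = 0.
  by apply: dot_eq0; apply: hb.
apply/eqP; rewrite -subr_eq0; apply/eqP/matrixP => i j.
have := congr1 (fun M : 'cV[R]_d => M i 0) (hN (delta_mx j 0)).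
by rewrite -colE !mxE.
Qed.

Lemma vertex_act n d e (T : 'M[R]_(e, d)) (P : polygon R n d) i :
  vertex (act_poly T P) i = T *m vertex P i.
Proof.
rewrite /vertex /act_poly; case: insub => [k|]; last by rewrite mulmx0.
by case: eqP => _; rewrite ?mulmx0.
Qed.

Lemma polyspace_act n d e (T : 'M[R]_(e, d)) (l : 'I_n -> R) (P : polygon R n d) :
  T^T *m T = 1%:M -> polyspace l P -> polyspace l (act_poly T P).
Proof.
move=> hT hP i; rewrite !vertex_act -mulmxBr enorm_isom //.
Qed.

Lemma normal_exists d (f : 'M[R]_(d.+1, d)) :
  exists u : 'cV[R]_d.+1, u^T *m u = 1%:M /\ u^T *m f = 0.
Proof.
set K := kermx f.
have hK : K != 0.
  rewrite -mxrank_eq0 mxrank_ker; have := rank_leq_col f.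
  by rewrite subn_eq0 -ltnNge ltnS.
have [i hi] : exists i, row i K != 0.
  case: (pickP (fun i => row i K != 0)) => [i hi|h]; first by exists i.
  case/eqP: hK; apply/row_matrixP => i; rewrite row0.
  by have := h i => /negbFE /eqP.
set r := row i K.
have hr : r *m f = 0 by rewrite /r -row_mul mulmx_ker row0.
set v := r^T.
have hv : v != 0.
  apply: contra hi => /eqP hv; apply/eqP; rewrite -/r.
  have -> : r = v^T by rewrite /v trmxK.
  by rewrite hv linear0.
set c := dot v v.
have hc : 0 < c.
  rewrite lt_def dot_ge0 andbT; apply: contra hv => /eqP h.
  by apply/eqP; apply: dot_eq0.
set s := Num.sqrt c.
have hs : 0 < s by rewrite sqrtr_gt0.
exists (s^-1 *: v); split.
  rewrite [(_ *: v)^T]linearZ /= -scalemxAl -scalemxAr dotE !scale_scalar_mx.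
  congr (_%:M); rewrite -/c.
  have hsc : s ^+ 2 = c by rewrite sqr_sqrtr // ltW.
  rewrite -hsc; field; exact: lt0r_neq0.
by rewrite [(_ *: v)^T]linearZ /= -scalemxAl /v trmxK hr scaler0.
Qed.

Lemma complete d (f : 'M[R]_(d.+1, d)) (u : 'cV[R]_d.+1) :
  f^T *m f = 1%:M -> u^T *m u = 1%:M -> u^T *m f = 0 ->
  u *m u^T + f *m f^T = 1%:M.
Proof.
move=> hf hu huf.
have hfu : f^T *m u = 0 by rewrite -[f^T *m u]trmxK trmx_mul trmxK huf linear0.
pose U : 'M[R]_d.+1 := row_mx u f.
have hU : U^T *m U = 1%:M.
  by rewrite /U (tr_row_mx u f) (mul_col_row u^T f^T u f) hu huf hfu hf -scalar_mx_block.
have := mulmx1C hU.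
by rewrite /U (tr_row_mx u f) (mul_row_col u f u^T f^T).
Qed.

Lemma dotBr m (x y z : 'cV[R]_m) : dot x (y - z) = dot x y - dot x z.
Proof. by rewrite /dot mulmxBr !mxE. Qed.
Lemma dotBl m (x y z : 'cV[R]_m) : dot (x - y) z = dot x z - dot y z.
Proof. by rewrite /dot linearB /= mulmxBl !mxE. Qed.
Lemma dot1 m (x : 'cV[R]_m) : x^T *m x = 1%:M -> dot x x = 1.
Proof. by rewrite /dot => ->; rewrite mxE. Qed.

Lemma householder m (a u : 'cV[R]_m) : a^T *m a = 1%:M -> u^T *m u = 1%:M ->
  exists H : 'M[R]_m, [/\ H^T *m H = 1%:M, H *m a = u &
     forall x, dot (a - u) x = 0 -> H *m x = x].
Proof.
move=> ha hu.
set w := a - u.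
case: (eqVneq w 0) => hw.
  exists 1%:M; split => [||x _]; rewrite ?mul1mx ?trmx1 ?mul1mx //.
  by apply/eqP; rewrite -subr_eq0 -/w hw.
set c := dot w w.
have hc : c != 0 by apply/eqP => h; move: hw => /eqP; apply; exact: dot_eq0.
set k := 2 / c.
set W := w *m w^T.
have hWx x : W *m x = dot w x *: w by rewrite /W -mulmxA dotE mul_mx_scalar.
have hWW : W *m W = c *: W.
  by rewrite {2}/W mulmxA hWx -scalemxAl.
have hWt : W^T = W by rewrite /W trmx_mul trmxK.
exists (1%:M - k *: W); split.
- have hHt : (1%:M - k *: W)^T = 1%:M - k *: W.
    by rewrite raddfB /= linearZ /= trmx1 hWt.
  rewrite hHt.
  rewrite mulmxBl mul1mx mulmxBr mulmx1 -scalemxAl -scalemxAr hWW.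
  apply/matrixP => i j; rewrite !mxE /k; field; exact: hc.
- set t := dot u a.
  have haa := dot1 ha; have huu := dot1 hu.
  have hwa : dot w a = 1 - t by rewrite /w dotBl haa.
  have hc2 : c = 2 - 2 * t.
    by rewrite /c /w !dotBl !dotBr haa huu (dotC a u) -/t; ring.
  have hk : k * (1 - t) = 1.
    rewrite /k; move: hc; rewrite hc2 => hc'; field; exact: hc'.
  rewrite mulmxBl mul1mx -scalemxAl hWx hwa scalerA hk scale1r /w.
  by rewrite opprB addrCA subrr addr0.
- move=> x hx; rewrite mulmxBl mul1mx -scalemxAl hWx -/w hx.
  by rewrite scale0r scaler0 subr0.
Qed.

End Helpers.

Theorem proposition4p4 (R : realType) (n d : nat) (hn : (3 <= n)%N) (hd : (2 <= d)%N)
  (l : 'I_n -> R) (hl : forall i, 0 < l i)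
  (f : 'M[R]_(d.+1, d)) (hf : lin_isometry f)
  (P : polygon R n d) (hP : polyspace l P) :
  forall Q : polygon R n d,
    (polyspace l Q /\
     poly_orbit (@special_orthogonal_mx R d.+1) (act_poly f P) (act_poly f Q))
    <-> poly_orbit (@orthogonal_mx R d) P Q.
Proof.
have hff := iso_tr hf.
have [u [hu huf]] := normal_exists f.
have hfu : f^T *m u = 0 by rewrite -[f^T *m u]trmxK trmx_mul trmxK huf linear0.
have hcomp := complete hff hu huf.
have hff' : f *m f^T = 1%:M - u *m u^T by rewrite -hcomp addrC addKr.
have hu0 x : dot u (f *m x) = 0 by rewrite /dot mulmxA huf mul0mx mxE.
move=> Q; split.
- move=> [hQ [S [hSo hSd] hSP]].
  have hk k : f *m Q k = S *m (f *m P k).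
    by have := congr1 (fun g : polygon R n d.+1 => g k) hSP.
  have hStS : S^T *m S = 1%:M := mulmx1C hSo.
  set a := S *m u.
  have ha : a^T *m a = 1%:M.
    by rewrite /a trmx_mul -mulmxA (mulmxA S^T) hStS mul1mx.
  have [H [hH hHa hHx]] := householder ha hu.
  set S' := H *m S.
  have hS'S : S'^T *m S' = 1%:M.
    by rewrite /S' trmx_mul -mulmxA (mulmxA H^T) hH mul1mx.
  have hS'u : S' *m u = u by rewrite /S' -mulmxA hHa.
  have hS'tu : S'^T *m u = u by rewrite -{1}hS'u mulmxA hS'S mul1mx.
  have hutS : u^T *m S' = u^T by rewrite -[in RHS]hS'tu trmx_mul trmxK.
  exists (f^T *m S' *m f).
  + rewrite /orthogonal_mx; apply: mulmx1C.
    have h1 : S'^T *m (f *m f^T) *m S' = f *m f^T.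
      rewrite hff' mulmxBr mulmx1 mulmxBl hS'S (mulmxA S'^T u) hS'tu -(mulmxA u) hutS.
      by [].
    rewrite (trmx_mul (f^T *m S') f) (trmx_mul f^T S') trmxK.
    have -> : f^T *m (S'^T *m f) *m (f^T *m S' *m f) =
              f^T *m (S'^T *m (f *m f^T) *m S') *m f by rewrite !mulmxA.
    by rewrite h1 !mulmxA hff mul1mx hff.
  + apply: boolp.funext => k; rewrite /act_poly /=.
    rewrite -[RHS]mulmxA -[RHS]mulmxA /S' -(mulmxA H S) -hk hHx; first by rewrite mulmxA hff mul1mx.
    rewrite dotBl hu0 subr0 hk dot_tr /a mulmxA hStS mul1mx hu0 //.
- move=> [T hT ->].
  have hTt : T^T *m T = 1%:M := mulmx1C hT.
  split; first exact: polyspace_act.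
  set s := \det T.
  have hs2 : s * \det T = 1.
    by rewrite /s -{2}det_tr -det_mulmx hT det1.
  pose U : 'M[R]_d.+1 := row_mx u f.
  have hU : U^T *m U = 1%:M.
    by rewrite /U (tr_row_mx u f) (mul_col_row u^T f^T u f) hu huf hfu hff -scalar_mx_block.
  have hUU : U *m U^T = 1%:M := mulmx1C hU.
  pose D : 'M[R]_(1 + d) := block_mx s%:M 0 0 T.
  have hDD : D *m D^T = 1%:M.
    rewrite /D tr_block_mx mulmx_block !trmx0 !mulmx0 !mul0mx !addr0 !add0r hT.
    by rewrite tr_scalar_mx mul_scalar_mx scale_scalar_mx hs2 -scalar_mx_block.
  exists (U *m D *m U^T).
  + split.
    * rewrite /orthogonal_mx !trmx_mul trmxK !mulmxA -(mulmxA (U *m D)) hU mulmx1.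
      by rewrite -(mulmxA U D) hDD mulmx1 hUU.
    * rewrite !det_mulmx det_tr /D (det_ublock (s%:M : 'M[R]_1) 0 T) det_scalar1 hs2 mulr1.
      by rewrite -{2}det_tr -det_mulmx hUU det1.
  + have hUf : U *m D *m U^T *m f = f *m T.
      rewrite -mulmxA /U (tr_row_mx u f) mul_col_mx huf hff /D. rewrite -mulmxA (mul_block_col (s%:M : 'M[R]_1) 0 0 T (0 : 'M[R]_(1,d)) 1%:M).
      by rewrite !mulmx0 !mul0mx !mulmx1 addr0 add0r (mul_row_col u f) mulmx0 add0r.
    apply: boolp.funext => k; rewrite /act_poly.
    by rewrite [RHS]mulmxA hUf mulmxA.
Qed.
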